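(* Let $\mathfrak g$ be a unimodular Lie algebra with a Hermitian structure $(J,g)$ and let $e$ be a unitary frame. If $D^j_{ik}=D^j_{ki}$ for all $i,j,k$, then the Chern scalar curvature satisfies $s=-\sum_{r,s,t}|D^t_{rs}|^2\le0$, with $s<0$ unless $D=0$. If $D^j_{ik}=-D^j_{ki}$ for all $i,j,k$, then $s=\sum_{r,s,t}|D^t_{rs}|^2\ge0$, with $s>0$ unless $D=0$.
   Context: Hermitian structure on a real Lie algebra $\mathfrak g$ of dimension $2n$: integrable almost complex structure $J$ and $J$-invariant inner product $g$. Unimodular: $\operatorname{tr}\mathrm{ad}_x=0$ for all $x$. $\mathfrak g^{1,0}=\{x-\sqrt{-1}Jx\}$, $g$ extended bilinearly, unitary frame $e_1,\dots,e_n$. $D^j_{ik}=g([\bar e_j,e_k],e_i)$. $R$ is the curvature of the Chern connection (unique connection preserving $J,g$ with torsion of vanishing $(1,1)$-part), $R_{i\bar jk\bar\ell}=g(R(e_i,\bar e_j)e_k,\bar e_\ell)$, and the Chern scalar curvature is $s=\sum_{i,r}R_{i\bar ir\bar r}$. *)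

(* Defs.v *)
From HB Require Import structures.
From mathcomp Require Import all_boot all_order all_algebra.
From mathcomp Require Import complex.
Set Implicit Arguments. Unset Strict Implicit. Unset Printing Implicit Defensive.
Import Order.TTheory GRing.Theory Num.Theory.
Local Open Scope ring_scope.

(* A real Lie algebra of dimension m is modelled on R^m (row vectors
   'rV[R]_m) through its structure constants c : [b_i, b_j] = c i j,
   where b_i is the standard basis.  Every real bilinear/linear datum
   (bracket, J, g, connection) is given by real coefficients; the same
   formulas with the coefficients embedded by [emb] give the real
   objects (K = R, emb = id) or their C-(bi)linear extensions to the
   complexification C^m (K = R[i], emb = real embedding). *)

Definition cR {R : rcfType} (r : R) : R[i] := Complex r 0.

Section Defs.
Variables (R : rcfType) (m : nat).


Definition bilin (K : comNzRingType) (emb : R -> K)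
  (B : 'I_m -> 'I_m -> 'rV[R]_m) (x y : 'rV[K]_m) : 'rV[K]_m :=
  \sum_(i < m) \sum_(j < m) (x 0 i * y 0 j) *: map_mx emb (B i j).

Definition linop (K : comNzRingType) (emb : R -> K) (A : 'M[R]_m)
  (x : 'rV[K]_m) : 'rV[K]_m := x *m map_mx emb A.

(* bilinear form with Gram matrix G (extended bilinearly, not sesquilinearly) *)
Definition bform (K : comNzRingType) (emb : R -> K) (G : 'M[R]_m)
  (x y : 'rV[K]_m) : K := (x *m map_mx emb G *m y^T) 0 0.

Definition is_lie_algebra (c : 'I_m -> 'I_m -> 'rV[R]_m) : Prop :=
  (forall x y : 'rV[R]_m, bilin id c x y = - bilin id c y x) /\
  (forall x y z : 'rV[R]_m,
      bilin id c x (bilin id c y z) + bilin id c y (bilin id c z x)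
      + bilin id c z (bilin id c x y) = 0).

Definition ad_mx (c : 'I_m -> 'I_m -> 'rV[R]_m) (x : 'rV[R]_m) : 'M[R]_m :=
  \matrix_(k, l) bilin id c x (delta_mx 0 k) 0 l.

Definition unimodular (c : 'I_m -> 'I_m -> 'rV[R]_m) : Prop :=
  forall x : 'rV[R]_m, \tr (ad_mx c x) = 0.

Definition almost_complex (J : 'M[R]_m) : Prop := J *m J = - 1%:M.

Definition nijenhuis_free (c : 'I_m -> 'I_m -> 'rV[R]_m) (J : 'M[R]_m) : Prop :=
  forall x y : 'rV[R]_m,
    bilin id c (linop id J x) (linop id J y)
    - linop id J (bilin id c (linop id J x) y)
    - linop id J (bilin id c x (linop id J y))
    - bilin id c x y = 0.

Definition J_inner_product (J G : 'M[R]_m) : Prop :=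
  (forall x y : 'rV[R]_m, bform id G x y = bform id G y x) /\
  (forall x : 'rV[R]_m, x != 0 -> 0 < bform id G x x) /\
  (forall x y : 'rV[R]_m, bform id G (linop id J x) (linop id J y) = bform id G x y).

Definition cplx (x : 'rV[R]_m) : 'rV[R[i]]_m := map_mx cR x.
Definition cconj (z : 'rV[R[i]]_m) : 'rV[R[i]]_m := map_mx Num.conj z.

Definition in10 (J : 'M[R]_m) (z : 'rV[R[i]]_m) : Prop :=
  exists x : 'rV[R]_m, z = cplx x - 'i *: linop cR J (cplx x).

(* torsion and curvature of the (left-invariant) connection with
   nabla_{b_i} b_j = Gam i j, over K *)
Definition torsion (K : comNzRingType) (emb : R -> K)
  (c Gam : 'I_m -> 'I_m -> 'rV[R]_m) (x y : 'rV[K]_m) : 'rV[K]_m :=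
  bilin emb Gam x y - bilin emb Gam y x - bilin emb c x y.

Definition curvature (K : comNzRingType) (emb : R -> K)
  (c Gam : 'I_m -> 'I_m -> 'rV[R]_m) (x y z : 'rV[K]_m) : 'rV[K]_m :=
  bilin emb Gam x (bilin emb Gam y z) - bilin emb Gam y (bilin emb Gam x z)
  - bilin emb Gam (bilin emb c x y) z.

(* Gam is the Chern connection of (J, g): nabla J = 0, nabla g = 0, and the
   torsion has vanishing (1,1)-part: T(Z, conj W) = 0 for Z, W in g^{1,0}.
   (The Chern connection is unique, so quantifying over all such Gam is
   the same as taking the Chern connection.) *)
Definition is_chern (c : 'I_m -> 'I_m -> 'rV[R]_m) (J G : 'M[R]_m)
  (Gam : 'I_m -> 'I_m -> 'rV[R]_m) : Prop :=
  (forall x y : 'rV[R]_m,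
      bilin id Gam x (linop id J y) = linop id J (bilin id Gam x y)) /\
  (forall x y z : 'rV[R]_m,
      bform id G (bilin id Gam x y) z + bform id G y (bilin id Gam x z) = 0) /\
  (forall Z W : 'rV[R[i]]_m, in10 J Z -> in10 J W ->
      torsion cR c Gam Z (cconj W) = 0).

End Defs.

Section Frame.
Variables (R : rcfType) (n : nat).
Local Notation m := (n.*2).

Definition unitary_frame (J G : 'M[R]_m) (e : 'I_n -> 'rV[R[i]]_m) : Prop :=
  (forall i, in10 J (e i)) /\
  (forall i j, bform cR G (e i) (cconj (e j)) = (i == j)%:R).

Definition Dcoef (c : 'I_m -> 'I_m -> 'rV[R]_m) (G : 'M[R]_m)
  (e : 'I_n -> 'rV[R[i]]_m) (j i k : 'I_n) : R[i] :=
  bform cR G (bilin cR c (cconj (e j)) (e k)) (e i).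

Definition Rcoef (c Gam : 'I_m -> 'I_m -> 'rV[R]_m) (G : 'M[R]_m)
  (e : 'I_n -> 'rV[R[i]]_m) (i j k l : 'I_n) : R[i] :=
  bform cR G (curvature cR c Gam (e i) (cconj (e j)) (e k)) (cconj (e l)).

Definition chern_scalar (c Gam : 'I_m -> 'I_m -> 'rV[R]_m) (G : 'M[R]_m)
  (e : 'I_n -> 'rV[R[i]]_m) : R[i] :=
  \sum_(i < n) \sum_(r < n) Rcoef c Gam G e i i r r.

End Frame.

(* Main.v *)
Require Import Defs.
From HB Require Import structures.
From mathcomp Require Import all_boot all_order all_algebra.
From mathcomp Require Import complex.
From mathcomp Require Import ring.
Import Order.TTheory GRing.Theory Num.Theory.
Local Open Scope ring_scope.
Set Implicit Arguments. Unset Strict Implicit. Unset Printing Implicit Defensive.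

Section Gen.
Variables (R : rcfType) (m : nat).
Local Notation C := R[i].
Local Notation rV K := 'rV[K]_m.

Lemma cRE (r : R) : cR r = real_complex R r. Proof. by []. Qed.
Lemma cRD (a b : R) : cR (a + b) = cR a + cR b. Proof. by rewrite !cRE rmorphD. Qed.
Lemma cRM (a b : R) : cR (a * b) = cR a * cR b. Proof. by rewrite !cRE rmorphM. Qed.
Lemma cR0 : cR 0 = 0 :> C. Proof. by rewrite cRE rmorph0. Qed.
Lemma cR1 : cR 1 = 1 :> C. Proof. by rewrite cRE rmorph1. Qed.
Lemma cRN (a : R) : cR (- a) = - cR a. Proof. by rewrite !cRE rmorphN. Qed.
Lemma cR_sum (I : finType) (F : I -> R) : cR (\sum_i F i) = \sum_i cR (F i).
Proof. by rewrite cRE rmorph_sum. Qed.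
Lemma conj_cR (a : R) : (cR a)^* = cR a.
Proof. by rewrite cRE; apply: conjc_real. Qed.

Lemma bilinDl (K : comNzRingType) (emb : R -> K) B (a : K) (x x' y : 'rV[K]_m) :
  bilin emb B (a *: x + x') y = a *: bilin emb B x y + bilin emb B x' y.
Proof.
rewrite /bilin scaler_sumr -big_split; apply: eq_bigr => i _.
rewrite scaler_sumr -big_split; apply: eq_bigr => j _.
by rewrite !mxE mulrDl scalerDl scalerA mulrA.
Qed.

Lemma bilinDr (K : comNzRingType) (emb : R -> K) B (a : K) (x y y' : 'rV[K]_m) :
  bilin emb B x (a *: y + y') = a *: bilin emb B x y + bilin emb B x y'.
Proof.
rewrite /bilin scaler_sumr -big_split; apply: eq_bigr => i _.
rewrite scaler_sumr -big_split; apply: eq_bigr => j _.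
by rewrite !mxE mulrDr scalerDl scalerA mulrCA.
Qed.

Lemma linopD (K : comNzRingType) (emb : R -> K) A (a : K) (x x' : 'rV[K]_m) :
  linop emb A (a *: x + x') = a *: linop emb A x + linop emb A x'.
Proof. by rewrite /linop mulmxDl scalemxAl. Qed.

Lemma bformDl (K : comNzRingType) (emb : R -> K) G (a : K) (x x' y : 'rV[K]_m) :
  bform emb G (a *: x + x') y = a * bform emb G x y + bform emb G x' y.
Proof. by rewrite /bform !mulmxDl -!scalemxAl !mxE. Qed.

Lemma bformDr (K : comNzRingType) (emb : R -> K) G (a : K) (x y y' : 'rV[K]_m) :
  bform emb G x (a *: y + y') = a * bform emb G x y + bform emb G x y'.
Proof. by rewrite /bform linearD linearZ /= mulmxDr -!scalemxAr !mxE. Qed.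

Definition cplx' (x : 'rV[R]_m) : 'rV[C]_m := map_mx cR x.

Lemma cplx_delta k : map_mx cR (delta_mx 0 k : 'rV[R]_m) = delta_mx 0 k.
Proof. by apply/matrixP => a b; rewrite !mxE; case: (_ && _); rewrite ?cR1 ?cR0. Qed.

Lemma map_id_mx (A : 'rV[R]_m) : map_mx id A = A.
Proof. by apply/matrixP => a b; rewrite mxE. Qed.

Lemma bilin_cplx B (x y : 'rV[R]_m) :
  bilin cR B (map_mx cR x) (map_mx cR y) = map_mx cR (bilin id B x y).
Proof.
apply/matrixP => a b; rewrite /bilin !mxE !summxE cR_sum; apply: eq_bigr => i _.
rewrite !summxE cR_sum; apply: eq_bigr => j _.
by rewrite !mxE !cRM.
Qed.

Lemma linop_cplx A (x : 'rV[R]_m) :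
  linop cR A (map_mx cR x) = map_mx cR (linop id A x).
Proof.
apply/matrixP => a b; rewrite /linop !mxE cR_sum; apply: eq_bigr => i _.
by rewrite !mxE cRM.
Qed.

Lemma bform_cplx A (x y : 'rV[R]_m) :
  bform cR A (map_mx cR x) (map_mx cR y) = cR (bform id A x y).
Proof.
rewrite /bform !mxE cR_sum; apply: eq_bigr => i _.
rewrite cRM; congr (_ * _); last by rewrite !mxE.
rewrite !mxE cR_sum; apply: eq_bigr => j _.
by rewrite !mxE cRM.
Qed.


Lemma lin_sumV (V : lmodType C) (f : 'rV[C]_m -> V) :
  (forall a x y, f (a *: x + y) = a *: f x + f y) ->
  forall x, f x = \sum_k x 0 k *: f (delta_mx 0 k).
Proof.
move=> hf x; have f0 : f 0 = 0.
  have := hf 1 0 0; rewrite scaler0 add0r scale1r.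
  by move/(congr1 (fun v => v - f 0)); rewrite addrK subrr.
rewrite {1}(row_sum_delta x); elim/big_rec2: _ => [//|k v w _ <-].
by rewrite hf.
Qed.

Lemma lin_sumS (f : 'rV[C]_m -> C) :
  (forall a x y, f (a *: x + y) = a * f x + f y) ->
  forall x, f x = \sum_k x 0 k * f (delta_mx 0 k).
Proof.
move=> hf x; have f0 : f 0 = 0.
  have := hf 1 0 0; rewrite scaler0 add0r mul1r.
  by move/(congr1 (fun v => v - f 0)); rewrite addrK subrr.
rewrite {1}(row_sum_delta x); elim/big_rec2: _ => [//|k v w _ <-].
by rewrite hf.
Qed.

Lemma lift2V (V : lmodType C) (T : 'rV[C]_m -> 'rV[C]_m -> V) :
  (forall a x x' y, T (a *: x + x') y = a *: T x y + T x' y) ->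
  (forall a x y y', T x (a *: y + y') = a *: T x y + T x y') ->
  (forall i j, T (delta_mx 0 i) (delta_mx 0 j) = 0) ->
  forall x y, T x y = 0.
Proof.
move=> h1 h2 h0 x y; rewrite (@lin_sumV _ (fun x => T x y) (fun a x x' => h1 a x x' y) x).
apply: big1 => i _; rewrite (@lin_sumV _ (T _) (fun a y y' => h2 a _ y y') y).
by rewrite big1 ?scaler0 // => j _; rewrite h0 scaler0.
Qed.

Lemma lift2S (T : 'rV[C]_m -> 'rV[C]_m -> C) :
  (forall a x x' y, T (a *: x + x') y = a * T x y + T x' y) ->
  (forall a x y y', T x (a *: y + y') = a * T x y + T x y') ->
  (forall i j, T (delta_mx 0 i) (delta_mx 0 j) = 0) ->
  forall x y, T x y = 0.
Proof.
move=> h1 h2 h0 x y; rewrite (@lin_sumS (fun x => T x y) (fun a x x' => h1 a x x' y) x).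
apply: big1 => i _; rewrite (@lin_sumS (T _) (fun a y y' => h2 a _ y y') y).
by rewrite big1 ?mulr0 // => j _; rewrite h0 mulr0.
Qed.

Lemma lift3V (V : lmodType C) (T : 'rV[C]_m -> 'rV[C]_m -> 'rV[C]_m -> V) :
  (forall a x x' y z, T (a *: x + x') y z = a *: T x y z + T x' y z) ->
  (forall a x y y' z, T x (a *: y + y') z = a *: T x y z + T x y' z) ->
  (forall a x y z z', T x y (a *: z + z') = a *: T x y z + T x y z') ->
  (forall i j k, T (delta_mx 0 i) (delta_mx 0 j) (delta_mx 0 k) = 0) ->
  forall x y z, T x y z = 0.
Proof.
move=> h1 h2 h3 h0 x y z; rewrite (@lin_sumV _ (fun x => T x y z) (fun a x x' => h1 a x x' y z) x).
apply: big1 => i _; rewrite (@lift2V _ (T (delta_mx 0 i))) ?scaler0 //.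
all: by move=> *; first [apply: h2 | apply: h3 | apply: h0].
Qed.

Lemma lift3S (T : 'rV[C]_m -> 'rV[C]_m -> 'rV[C]_m -> C) :
  (forall a x x' y z, T (a *: x + x') y z = a * T x y z + T x' y z) ->
  (forall a x y y' z, T x (a *: y + y') z = a * T x y z + T x y' z) ->
  (forall a x y z z', T x y (a *: z + z') = a * T x y z + T x y z') ->
  (forall i j k, T (delta_mx 0 i) (delta_mx 0 j) (delta_mx 0 k) = 0) ->
  forall x y z, T x y z = 0.
Proof.
move=> h1 h2 h3 h0 x y z; rewrite (@lin_sumS (fun x => T x y z) (fun a x x' => h1 a x x' y z) x).
apply: big1 => i _; rewrite (@lift2S (T (delta_mx 0 i))) ?mulr0 //.
all: by move=> *; first [apply: h2 | apply: h3 | apply: h0].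
Qed.


Lemma lift1V (V : lmodType C) (T : 'rV[C]_m -> V) :
  (forall a x x', T (a *: x + x') = a *: T x + T x') ->
  (forall i, T (delta_mx 0 i) = 0) -> forall x, T x = 0.
Proof.
move=> h1 h0 x; rewrite (@lin_sumV _ T h1 x); apply: big1 => i _.
by rewrite h0 scaler0.
Qed.

Lemma map_cRD p q (A B : 'M[R]_(p,q)) : map_mx cR (A + B) = map_mx cR A + map_mx cR B.
Proof. by apply/matrixP => a b; rewrite !mxE cRD. Qed.
Lemma map_cRN p q (A : 'M[R]_(p,q)) : map_mx cR (- A) = - map_mx cR A.
Proof. by apply/matrixP => a b; rewrite !mxE cRN. Qed.
Lemma map_cRB p q (A B : 'M[R]_(p,q)) : map_mx cR (A - B) = map_mx cR A - map_mx cR B.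
Proof. by rewrite map_cRD map_cRN. Qed.
Lemma map_cR0 p q : map_mx cR (0 : 'M[R]_(p,q)) = 0.
Proof. by apply/matrixP => a b; rewrite !mxE cR0. Qed.
Lemma map_idM p q (A : 'M[R]_(p,q)) : map_mx id A = A.
Proof. by apply/matrixP => a b; rewrite mxE. Qed.

Lemma lin2 (K : pzRingType) (V : lmodType K) (a : K) (A A' B B' : V) :
  (a *: A + A') + (a *: B + B') = a *: (A + B) + (A' + B').
Proof. by rewrite addrACA scalerDr. Qed.
Lemma lin2B (K : pzRingType) (V : lmodType K) (a : K) (A A' B B' : V) :
  (a *: A + A') - (a *: B + B') = a *: (A - B) + (A' - B').
Proof. by rewrite opprD addrACA scalerBr. Qed.

End Gen.

Section Alg.
Variables (K : comNzRingType) (n : nat).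
Variables (D Q Cf : 'I_n -> 'I_n -> 'I_n -> K).
Hypothesis HJ : forall t s,
  \sum_p Cf t s p * Q t p s
  + (\sum_p (- Q t s p) * Cf t p s + \sum_p (- D t p s) * (- Q p t s))
  + (\sum_p Q t t p * (- Cf p s s) + \sum_p D t p t * (- Q p s s)) = 0.
Hypothesis HU : forall p, \sum_s Cf p s s + \sum_s (- D s s p) = 0.

Let T := \sum_t \sum_r \sum_s D t r s * Q r t s.
Let W := \sum_t (\sum_p Q t t p * (\sum_s D s s p) + \sum_p D t p t * (\sum_s Q p s s)).

Lemma exch3 (F : 'I_n -> 'I_n -> K) : \sum_a \sum_b F a b = \sum_b \sum_a F a b.
Proof. exact: exchange_big. Qed.

Lemma per_t t : \sum_s (\sum_p Cf t s p * Q t p s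
  + (\sum_p (- Q t s p) * Cf t p s + \sum_p (- D t p s) * (- Q p t s))
  + (\sum_p Q t t p * (- Cf p s s) + \sum_p D t p t * (- Q p s s)))
  = \sum_r \sum_s D t r s * Q r t s
    - (\sum_p Q t t p * (\sum_s D s s p) + \sum_p D t p t * (\sum_s Q p s s)).
Proof.
rewrite !big_split /=.
have c1 : \sum_s \sum_p Cf t s p * Q t p s + \sum_s \sum_p (- Q t s p) * Cf t p s = 0.
  rewrite [X in _ + X]exch3 -big_split big1 // => s _.
  by rewrite -big_split big1 // => p _; rewrite /= mulNr [Q _ _ _ * _]mulrC addrN.
have c3 : \sum_s \sum_p (- D t p s) * (- Q p t s) = \sum_r \sum_s D t r s * Q r t s.
  by rewrite exch3; apply: eq_bigr => r _; apply: eq_bigr => s _; rewrite mulrNN.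
have c4 : \sum_s \sum_p Q t t p * (- Cf p s s) = - \sum_p Q t t p * (\sum_s D s s p).
  rewrite exch3 -sumrN; apply: eq_bigr => p _.
  have hU : \sum_s Cf p s s = \sum_s D s s p.
    by move/eqP: (HU p); rewrite sumrN subr_eq0 => /eqP.
  by rewrite -hU mulr_sumr -sumrN; apply: eq_bigr => s _; rewrite mulrN.
have c5 : \sum_s \sum_p D t p t * (- Q p s s) = - \sum_p D t p t * (\sum_s Q p s s).
  rewrite exch3 -sumrN; apply: eq_bigr => p _.
  by rewrite mulr_sumr -sumrN; apply: eq_bigr => s _; rewrite mulrN.
by rewrite c3 c4 c5 (addrA (\sum_s \sum_p Cf t s p * Q t p s)) c1 add0r opprD.
Qed.

Lemma W_T : W = T.
Proof.
have h0 : \sum_t \sum_s (\sum_p Cf t s p * Q t p s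
  + (\sum_p (- Q t s p) * Cf t p s + \sum_p (- D t p s) * (- Q p t s))
  + (\sum_p Q t t p * (- Cf p s s) + \sum_p D t p t * (- Q p s s))) = 0.
  by rewrite big1 // => t _; rewrite big1.
rewrite (eq_bigr _ (fun t _ => per_t t)) sumrB in h0.
by move/eqP: h0; rewrite subr_eq0 => /eqP.
Qed.


Lemma S_W : \sum_i \sum_r (\sum_l Q i r l * D r l i - \sum_l D l r i * Q i l r
  - (\sum_p (- Q i i p) * D r r p + \sum_p (- D i p i) * Q p r r)) = W.
Proof.
apply: eq_bigr => i _; rewrite !sumrB.
have x12 : \sum_r \sum_l Q i r l * D r l i = \sum_r \sum_l D l r i * Q i l r.
  by rewrite exch3; apply: eq_bigr => r _; apply: eq_bigr => l _; rewrite mulrC.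
rewrite x12 subrr sub0r big_split /= opprD.
have y1 : \sum_r \sum_p (- Q i i p) * D r r p = - \sum_p Q i i p * (\sum_s D s s p).
  rewrite exch3 -sumrN; apply: eq_bigr => p _; rewrite mulr_sumr -sumrN.
  by apply: eq_bigr => r _; rewrite mulNr.
have y2 : \sum_r \sum_p (- D i p i) * Q p r r = - \sum_p D i p i * (\sum_s Q p s s).
  rewrite exch3 -sumrN; apply: eq_bigr => p _; rewrite mulr_sumr -sumrN.
  by apply: eq_bigr => r _; rewrite mulNr.
by rewrite y1 y2 !opprK.
Qed.

Lemma S_T : \sum_i \sum_r (\sum_l Q i r l * D r l i - \sum_l D l r i * Q i l r
  - (\sum_p (- Q i i p) * D r r p + \sum_p (- D i p i) * Q p r r)) = T.
Proof. by rewrite S_W W_T. Qed.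

End Alg.

Section Main.
Variables (R : rcfType) (n : nat).
Local Notation m := (n.*2).
Local Notation C := R[i].
Variables (c : 'I_m -> 'I_m -> 'rV[R]_m) (J G : 'M[R]_m)
  (Gam : 'I_m -> 'I_m -> 'rV[R]_m) (e : 'I_n -> 'rV[C]_m).
Hypotheses (Hlie : is_lie_algebra c) (Huni : unimodular c)
  (Hac : almost_complex J) (Hnij : nijenhuis_free c J) (Hip : J_inner_product J G)
  (Hch : is_chern c J G Gam) (Hfr : unitary_frame J G e).

Local Notation br := (bilin cR c).
Local Notation nab := (bilin cR Gam).
Local Notation Lc := (linop cR J).
Local Notation gf := (bform cR G).
Local Notation eb i := (cconj (e i)).
Implicit Types (x y z w : 'rV[R[i]]_(n.*2)) (a : R[i]).

Ltac lin := rewrite ?(bilinDl, bilinDr, linopD, bformDl, bformDr);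
  rewrite ?lin2 ?lin2B //; try ring.
Ltac realize := rewrite -!cplx_delta !(linop_cplx, bilin_cplx, bform_cplx).

Lemma gf_sym x y : gf x y = gf y x.
Proof.
apply/eqP; rewrite -subr_eq0; apply/eqP; move: x y.
apply: lift2S => [a x x' y|a x y y'|i j]; try by lin.
by realize; rewrite Hip.1 subrr.
Qed.


Lemma LcLc x : Lc (Lc x) = - x.
Proof.
apply/eqP; rewrite -subr_eq0 opprK; apply/eqP; move: x.
apply: lift1V => [a x x'|i]; first by lin.
realize; rewrite -map_cRD /linop !map_idM -mulmxA Hac mulmxN mulmx1 addNr map_cR0 //.
Qed.

Lemma br_anti x y : br x y = - br y x.
Proof.
apply/eqP; rewrite -subr_eq0 opprK; apply/eqP; move: x y.
apply: lift2V => [a x x' y|a x y y'|i j]; try by lin.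
by realize; rewrite (Hlie.1 'e_i) map_cRN addNr.
Qed.

Lemma br_jacobi x y z : br x (br y z) + br y (br z x) + br z (br x y) = 0.
Proof.
move: x y z; apply: lift3V => [a x x' y z|a x y y' z|a x y z z'|i j k]; try by lin.
by realize; rewrite -!map_cRD Hlie.2 map_cR0.
Qed.

Lemma br_nij x y : br (Lc x) (Lc y) - Lc (br (Lc x) y) - Lc (br x (Lc y)) - br x y = 0.
Proof.
move: x y; apply: lift2V => [a x x' y|a x y y'|i j]; try by lin.
by realize; rewrite -!map_cRB Hnij map_cR0.
Qed.

Lemma gf_J x y : gf (Lc x) (Lc y) = gf x y.
Proof.
apply/eqP; rewrite -subr_eq0; apply/eqP; move: x y.
apply: lift2S => [a x x' y|a x y y'|i j]; try by lin.
by realize; rewrite Hip.2.2 subrr.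
Qed.

Lemma nab_J x y : nab x (Lc y) = Lc (nab x y).
Proof.
apply/eqP; rewrite -subr_eq0; apply/eqP; move: x y.
apply: lift2V => [a x x' y|a x y y'|i j]; try by lin.
by realize; rewrite Hch.1 subrr.
Qed.

Lemma nab_g x y z : gf (nab x y) z + gf y (nab x z) = 0.
Proof.
move: x y z; apply: lift3S => [a x x' y z|a x y y' z|a x y z z'|i j k]; try by lin.
by realize; rewrite -cRD Hch.2.1 cR0.
Qed.


Lemma gf0r x : gf x 0 = 0.
Proof. by rewrite /bform trmx0 mulmx0 mxE. Qed.
Lemma gf0l y : gf 0 y = 0.
Proof. by rewrite /bform !mul0mx mxE. Qed.
Lemma gfZr a x y : gf x (a *: y) = a * gf x y.
Proof. by have := bformDr cR G a x y 0; rewrite !addr0 gf0r addr0. Qed.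
Lemma gfZl a x y : gf (a *: x) y = a * gf x y.
Proof. by have := bformDl cR G a x 0 y; rewrite !addr0 gf0l addr0. Qed.
Lemma gfDr x y y' : gf x (y + y') = gf x y + gf x y'.
Proof. by have := bformDr cR G 1 x y y'; rewrite scale1r mul1r. Qed.
Lemma gfDl x x' y : gf (x + x') y = gf x y + gf x' y.
Proof. by have := bformDl cR G 1 x x' y; rewrite scale1r mul1r. Qed.
Lemma gfNr x y : gf x (- y) = - gf x y.
Proof. by rewrite -scaleN1r gfZr mulN1r. Qed.
Lemma gfNl x y : gf (- x) y = - gf x y.
Proof. by rewrite -scaleN1r gfZl mulN1r. Qed.
Lemma gfBl x x' y : gf (x - x') y = gf x y - gf x' y.
Proof. by rewrite gfDl gfNl. Qed.

Lemma bil0r (B : 'I_m -> 'I_m -> 'rV[R]_m) x : bilin cR B x 0 = 0.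
Proof. by rewrite /bilin big1 // => i _; rewrite big1 // => j _; rewrite mxE mulr0 scale0r. Qed.
Lemma bil0l (B : 'I_m -> 'I_m -> 'rV[R]_m) y : bilin cR B 0 y = 0.
Proof. by rewrite /bilin big1 // => i _; rewrite big1 // => j _; rewrite mxE mul0r scale0r. Qed.
Lemma bilZr (B : 'I_m -> 'I_m -> 'rV[R]_m) a x y : bilin cR B x (a *: y) = a *: bilin cR B x y.
Proof. by have := bilinDr cR B a x y 0; rewrite !addr0 bil0r addr0. Qed.
Lemma bilZl (B : 'I_m -> 'I_m -> 'rV[R]_m) a x y : bilin cR B (a *: x) y = a *: bilin cR B x y.
Proof. by have := bilinDl cR B a x 0 y; rewrite !addr0 bil0l addr0. Qed.
Lemma bilDl (B : 'I_m -> 'I_m -> 'rV[R]_m) x x' y : bilin cR B (x + x') y = bilin cR B x y + bilin cR B x' y.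
Proof. by have := bilinDl cR B 1 x x' y; rewrite !scale1r. Qed.
Lemma bilDr (B : 'I_m -> 'I_m -> 'rV[R]_m) x y y' : bilin cR B x (y + y') = bilin cR B x y + bilin cR B x y'.
Proof. by have := bilinDr cR B 1 x y y'; rewrite !scale1r. Qed.
Lemma LcZ a x : Lc (a *: x) = a *: Lc x.
Proof. by rewrite /linop scalemxAl. Qed.
Lemma LcB x y : Lc (x - y) = Lc x - Lc y.
Proof. by rewrite /linop mulmxBl. Qed.

Lemma cconjK x : cconj (cconj x) = x.
Proof. by apply/matrixP => a b; rewrite !mxE conjCK. Qed.
Lemma cconjZ a x : cconj (a *: x) = a^* *: cconj x.
Proof. by apply/matrixP => p q; rewrite !mxE rmorphM. Qed.
Lemma cconj_linop x : cconj (Lc x) = Lc (cconj x).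
Proof.
apply/matrixP => p q; rewrite /linop !mxE rmorph_sum; apply: eq_bigr => k _.
by rewrite rmorphM !mxE; congr (_ * _); apply: conj_cR.
Qed.
Lemma cconj_bil (B : 'I_m -> 'I_m -> 'rV[R]_m) x y : cconj (bilin cR B x y) = bilin cR B (cconj x) (cconj y).
Proof.
apply/matrixP => p q; rewrite /bilin !mxE !summxE rmorph_sum; apply: eq_bigr => i _.
rewrite !summxE rmorph_sum; apply: eq_bigr => j _.
by rewrite !mxE !rmorphM; congr (_ * _); apply: conj_cR.
Qed.
Lemma conj_gf x y : (gf x y)^* = gf (cconj x) (cconj y).
Proof.
rewrite /bform !mxE rmorph_sum; apply: eq_bigr => i _.
rewrite rmorphM !mxE rmorph_sum; congr (_ * _); apply: eq_bigr => j _.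
by rewrite !mxE rmorphM; congr (_ * _); apply: conj_cR.
Qed.

Lemma gf_LcL x y : gf (Lc x) y = - gf x (Lc y).
Proof. by rewrite -gf_J LcLc gfNl. Qed.

Lemma typ10 w l : Lc w = 'i *: w -> gf w (e l) = 0.
Proof.
move=> hw; have h1 := gf_LcL w (e l).
have he : Lc (e l) = 'i *: e l.
  have [x ->] := Hfr.1 l; rewrite LcB LcZ LcLc /cplx scalerN opprK scalerBr scalerA.
  by rewrite -expr2 sqrCi scaleN1r opprK addrC.
rewrite hw he gfZl gfZr in h1.
have : ('i + 'i) * gf w (e l) = 0 by rewrite mulrDl {1}h1 addNr.
move/eqP; rewrite mulf_eq0 => /orP[|/eqP //].
by rewrite -mulr2n mulrn_eq0 /= (negPf (neq0Ci _)).
Qed.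


Lemma Lc_e l : Lc (e l) = 'i *: e l.
Proof.
have [x ->] := Hfr.1 l; rewrite LcB LcZ LcLc /cplx scalerN opprK scalerBr scalerA.
by rewrite -expr2 sqrCi scaleN1r opprK addrC.
Qed.

Lemma Lc_eb l : Lc (eb l) = - 'i *: eb l.
Proof. by rewrite -cconj_linop Lc_e cconjZ conjCi. Qed.

Lemma typ01 w l : Lc w = - 'i *: w -> gf w (eb l) = 0.
Proof.
move=> hw; have : Lc (cconj w) = 'i *: cconj w.
  by rewrite -cconj_linop hw cconjZ -conjCi conjCK.
move/typ10 => /(_ l) /(congr1 Num.conj); rewrite conj_gf cconjK rmorph0 //.
Qed.

Lemma g_e_eb i j : gf (e i) (eb j) = (i == j)%:R.
Proof. exact: Hfr.2. Qed.
Lemma g_eb_e i j : gf (eb i) (e j) = (i == j)%:R.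
Proof. by rewrite gf_sym Hfr.2 eq_sym. Qed.
Lemma g_e_e i j : gf (e i) (e j) = 0.
Proof. exact: (@typ10 (e i) j (Lc_e i)). Qed.
Lemma g_eb_eb i j : gf (eb i) (eb j) = 0.
Proof. exact: (@typ01 (eb i) j (Lc_eb i)). Qed.

Definition Ee : 'M[C]_(n, m) := \matrix_(i, k) e i 0 k.
Definition Eb : 'M[C]_(n, m) := \matrix_(i, k) eb i 0 k.
Local Notation Gc := (map_mx cR G).

Lemma rowEe i : row i Ee = e i.
Proof. by apply/matrixP => a b; rewrite !mxE (ord1 a). Qed.
Lemma rowEb i : row i Eb = eb i.
Proof. by apply/matrixP => a b; rewrite !mxE (ord1 a). Qed.

Lemma gf_entry p q (A : 'M[C]_(p, m)) (B : 'M[C]_(q, m)) i j :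
  (A *m Gc *m B^T) i j = gf (row i A) (row j B).
Proof.
rewrite /bform !mxE; apply: eq_bigr => k _; rewrite !mxE; congr (_ * _).
by apply: eq_bigr => l _; rewrite !mxE.
Qed.

Lemma sq_inv p q (A : 'M[C]_(p, q)) (B : 'M[C]_(q, p)) :
  p = q -> A *m B = 1%:M -> B *m A = 1%:M.
Proof. by move=> pq; subst q; apply: mulmx1C. Qed.

Lemma frame_id : Gc *m (Eb^T *m Ee + Ee^T *m Eb) = 1%:M.
Proof.
have h : col_mx Ee Eb *m (Gc *m (col_mx Eb Ee)^T) = 1%:M.
  rewrite mulmxA tr_col_mx mul_col_mx mul_col_row scalar_mx_block.
  congr block_mx; apply/matrixP => i j; rewrite gf_entry !mxE ?rowEe ?rowEb.
  - by rewrite g_e_eb.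
  - by rewrite g_e_e.
  - by rewrite g_eb_eb.
  - by rewrite g_eb_e.
have := sq_inv (addnn n) h.
by rewrite -mulmxA tr_col_mx mul_row_col.
Qed.

Lemma mulEe (u : 'rV[C]_n) : u *m Ee = \sum_i u 0 i *: e i.
Proof.
apply/matrixP => a b; rewrite !mxE summxE; apply: eq_bigr => i _.
by rewrite !mxE (ord1 a).
Qed.
Lemma mulEb (u : 'rV[C]_n) : u *m Eb = \sum_i u 0 i *: eb i.
Proof.
apply/matrixP => a b; rewrite !mxE summxE; apply: eq_bigr => i _.
by rewrite !mxE (ord1 a).
Qed.

Lemma decomp v : v = \sum_i gf v (eb i) *: e i + \sum_i gf v (e i) *: eb i.
Proof.
rewrite {1}(_ : v = v *m (Gc *m (Eb^T *m Ee + Ee^T *m Eb))); last first.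
  by rewrite frame_id mulmx1.
rewrite !mulmxDr !mulmxA mulEe mulEb.
congr (_ + _); apply: eq_bigr => i _; congr (_ *: _);
  by rewrite gf_entry ?rowEe ?rowEb; congr gf; apply/matrixP => a b; rewrite !mxE (ord1 a).
Qed.


Lemma fsum (f : 'rV[C]_m -> C) (I : finType) (a : I -> C) (v : I -> 'rV[C]_m) :
  (forall a x y, f (a *: x + y) = a * f x + f y) ->
  f (\sum_i a i *: v i) = \sum_i a i * f (v i).
Proof.
move=> hf; have f0 : f 0 = 0.
  have := hf 1 0 0; rewrite scaler0 add0r mul1r.
  by move/(congr1 (fun u => u - f 0)); rewrite addrK subrr.
by elim/big_rec2: _ => [//|k u w _ <-]; rewrite hf.
Qed.

Lemma expand (f : 'rV[C]_m -> C) :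
  (forall a x y, f (a *: x + y) = a * f x + f y) ->
  forall v, f v = \sum_i gf v (eb i) * f (e i) + \sum_i gf v (e i) * f (eb i).
Proof.
move=> hf v; rewrite {1}(decomp v).
have hD x y : f (x + y) = f x + f y by rewrite -[x]scale1r hf mul1r scale1r.
by rewrite hD !fsum.
Qed.

Lemma tr_frame (M : 'M[C]_m) :
  \tr M = \sum_i gf (e i *m M) (eb i) + \sum_i gf (eb i *m M) (e i).
Proof.
have -> : \tr M = \tr (M *m (Gc *m (Eb^T *m Ee + Ee^T *m Eb))).
  by rewrite frame_id mulmx1.
rewrite !mulmxDr mxtraceD !mulmxA.
rewrite mxtrace_mulC [\tr (_ *m Eb)]mxtrace_mulC !mulmxA /mxtrace.
by congr (_ + _); apply: eq_bigr => i _; rewrite gf_entry row_mul ?rowEe ?rowEb.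
Qed.

Definition adC x : 'M[C]_m := \matrix_(k, l) (br x (delta_mx 0 k)) 0 l.

Lemma br_adC x v : br x v = v *m adC x.
Proof.
rewrite (@lin_sumV _ _ _ (br x) (fun a y y' => bilinDr cR c a x y y') v) mulmx_sum_row.
apply: eq_bigr => k _; congr (_ *: _); apply/matrixP => a b; rewrite !mxE (ord1 a).
by [].
Qed.

Lemma tr_adC x : \tr (adC x) = 0.
Proof.
have hl : forall a x y, \tr (adC (a *: x + y)) = a * \tr (adC x) + \tr (adC y).
  move=> a y z; rewrite /mxtrace mulr_sumr -big_split; apply: eq_bigr => k _.
  by rewrite !mxE bilinDl !mxE.
rewrite (@lin_sumS _ _ _ hl x); apply: big1 => i _.
have := Huni (delta_mx 0 i); rewrite /mxtrace => hu.
rewrite (_ : \sum_k adC 'e_i k k = cR (\sum_k ad_mx c 'e_i k k)).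
  by rewrite hu cR0 mulr0.
rewrite cR_sum; apply: eq_bigr => k _; rewrite !mxE -!cplx_delta bilin_cplx mxE.
by [].
Qed.

Lemma uni_frame x : \sum_i gf (br x (e i)) (eb i) + \sum_i gf (br x (eb i)) (e i) = 0.
Proof. by rewrite -[RHS](tr_adC x) tr_frame; congr (_ + _); apply: eq_bigr => i _; rewrite br_adC. Qed.


Definition Dk j i k := gf (br (eb j) (e k)) (e i).
Definition Qk j k l := gf (br (eb j) (e k)) (eb l).
Definition Ck t s p := gf (br (e t) (e s)) (eb p).

Lemma tors k j : nab (e k) (eb j) = nab (eb j) (e k) + br (e k) (eb j).
Proof.
have := Hch.2.2 (e k) (e j) (Hfr.1 k) (Hfr.1 j); rewrite /torsion.
by move/eqP; rewrite subr_eq0 subr_eq addrC => /eqP.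
Qed.

Lemma nab_e_typ x k l : gf (nab x (e k)) (e l) = 0.
Proof. by apply: typ10; rewrite -nab_J Lc_e bilZr. Qed.
Lemma nab_eb_typ x k l : gf (nab x (eb k)) (eb l) = 0.
Proof. by apply: typ01; rewrite -nab_J Lc_eb bilZr. Qed.

Lemma brN x y : br x y = - br y x.
Proof. exact: br_anti. Qed.

Lemma N1 j k l : gf (nab (eb j) (e k)) (eb l) = Qk j k l.
Proof.
have h := tors k j.
have -> : nab (eb j) (e k) = nab (e k) (eb j) - br (e k) (eb j) by rewrite h addrK.
by rewrite gfBl nab_eb_typ sub0r (brN (e k)) gfNl opprK.
Qed.

Lemma N2 i k l : gf (nab (e i) (e k)) (eb l) = Dk l k i.
Proof.
have h := nab_g (e i) (e k) (eb l).
have -> : gf (nab (e i) (e k)) (eb l) = - gf (e k) (nab (e i) (eb l)).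
  by move/eqP: h; rewrite addr_eq0 => /eqP.
rewrite tors gfDr (gf_sym _ (nab _ _)) nab_e_typ add0r gf_sym (brN (e i)) gfNl opprK.
by [].
Qed.

Lemma scal_fact (u0 v0 : C) :
  (-1) * u0 - 'i * v0 - 'i * v0 - u0 = 0 -> v0 = 'i * u0.
Proof.
move=> E; have hi : ('i : C) * 'i = -1 by rewrite -expr2 sqrCi.
have key : 2%:R * (v0 - 'i * u0) = 'i * ((-1) * u0 - 'i * v0 - 'i * v0 - u0) + 2%:R * v0 * (1 + 'i * 'i).
  by ring.
rewrite E hi addrN !mulr0 addr0 in key; move/eqP: key; rewrite mulf_eq0 pnatr_eq0 /=.
by rewrite subr_eq0 => /eqP.
Qed.

Lemma bree_typ t s p : gf (br (e t) (e s)) (e p) = 0.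
Proof.
apply: typ10.
have h := br_nij (e t) (e s); rewrite !Lc_e !bilZl !bilZr !LcZ scalerA -expr2 sqrCi in h.
apply/rowP => k; have := congr1 (fun w => w 0 k) h; rewrite !mxE => E.
exact: scal_fact.
Qed.


Lemma linA x w a y y' : gf (nab x (a *: y + y')) w = a * gf (nab x y) w + gf (nab x y') w.
Proof. by rewrite bilinDr bformDl. Qed.
Lemma linC z w a y y' : gf (nab (a *: y + y') z) w = a * gf (nab y z) w + gf (nab y' z) w.
Proof. by rewrite bilinDl bformDl. Qed.
Lemma linBr x w a y y' : gf (br x (a *: y + y')) w = a * gf (br x y) w + gf (br x y') w.
Proof. by rewrite bilinDr bformDl. Qed.

Opaque bilin bform cconj linop.
Opaque Dk Qk Ck.
Lemma add2 (a b a' b' : C) : a = a' -> b = b' -> a + b = a' + b'.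
Proof. by move=> -> ->. Qed.
Lemma sub3 (a b d a' b' d' : C) : a = a' -> b = b' -> d = d' -> a - b - d = a' - b' - d'.
Proof. by move=> -> -> ->. Qed.
Lemma add0E (a a' b : C) : a = a' -> b = 0 -> a + b = a'.
Proof. by move=> -> ->; rewrite addr0. Qed.

Lemma Rcoef_eq i r : Rcoef c Gam G e i i r r =
  \sum_l Qk i r l * Dk r l i - \sum_l Dk l r i * Qk i l r
  - (\sum_p (- Qk i i p) * Dk r r p + \sum_p (- Dk i p i) * Qk p r r).
Proof.
rewrite /Rcoef /curvature !gfBl.
have eA := @expand (fun v => gf (nab (e i) v) (eb r)) (linA (e i) (eb r))
  (nab (eb i) (e r)).
have eB := @expand (fun v => gf (nab (eb i) v) (eb r)) (linA (eb i) (eb r))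
  (nab (e i) (e r)).
have eC := @expand (fun v => gf (nab v (e r)) (eb r)) (linC (e r) (eb r))
  (br (e i) (eb i)).
cbv beta in eA; cbv beta in eB; cbv beta in eC.
apply: sub3.
- apply: etrans eA _; apply: add0E.
    by apply: eq_bigr => l _; rewrite N1 N2.
  by apply: big1 => l _; rewrite nab_e_typ mul0r.
- apply: etrans eB _; apply: add0E.
    by apply: eq_bigr => l _; rewrite N1 N2.
  by apply: big1 => l _; rewrite nab_e_typ mul0r.
- apply: etrans eC _; apply: add2; apply: eq_bigr => l _.
    by rewrite N2 (brN (e i)) gfNl.
  by rewrite N1 (brN (e i)) gfNl.
Qed.


Lemma add3 (a b d a' b' d' : C) : a = a' -> b = b' -> d = d' -> a + b + d = a' + b' + d'.
Proof. by move=> -> -> ->. Qed.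

Lemma HJk t s :
  \sum_p Ck t s p * Qk t p s
  + (\sum_p (- Qk t s p) * Ck t p s + \sum_p (- Dk t p s) * (- Qk p t s))
  + (\sum_p Qk t t p * (- Ck p s s) + \sum_p Dk t p t * (- Qk p s s)) = 0.
Proof.
have h := congr1 (gf^~ (eb s)) (br_jacobi (eb t) (e t) (e s)).
rewrite !gfDl gf0l in h.
have e1 := @expand (fun v => gf (br (eb t) v) (eb s)) (linBr (eb t) (eb s)) (br (e t) (e s)).
have e2 := @expand (fun v => gf (br (e t) v) (eb s)) (linBr (e t) (eb s)) (br (e s) (eb t)).
have e3 := @expand (fun v => gf (br (e s) v) (eb s)) (linBr (e s) (eb s)) (br (eb t) (e t)).
cbv beta in e1; cbv beta in e2; cbv beta in e3.
rewrite -[RHS]h; apply: add3.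
- apply: esym; apply: etrans e1 _; apply: add0E.
    by apply: eq_bigr => p _.
  by apply: big1 => p _; rewrite bree_typ mul0r.
- apply: esym; apply: etrans e2 _; apply: add2; apply: eq_bigr => p _.
    by rewrite (brN (e s)) gfNl.
  by rewrite (brN (e s)) gfNl (brN (e t)) gfNl.
- apply: esym; apply: etrans e3 _; apply: add2; apply: eq_bigr => p _.
    by rewrite (brN (e s)) gfNl.
  by rewrite (brN (e s)) gfNl.
Qed.

Lemma HUk p : \sum_s Ck p s s + \sum_s (- Dk s s p) = 0.
Proof.
rewrite -[RHS](uni_frame (e p)); apply: add2; apply: eq_bigr => s _ //.
by rewrite (brN (e p)) gfNl.
Qed.


Lemma s_formula : chern_scalar c Gam G e = \sum_t \sum_r \sum_s Dk t r s * Qk r t s.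
Proof.
rewrite /chern_scalar (eq_bigr _ (fun i _ => eq_bigr _ (fun r _ => Rcoef_eq i r))).
exact: (S_T HJk HUk).
Qed.

Lemma Q_conj j k l : Qk j k l = - (Dk k l j)^*.
Proof.
Transparent Dk Qk.
rewrite /Dk /Qk conj_gf cconj_bil cconjK (brN (e k)) gfNl opprK.
by [].
Qed.

Lemma sum_reorder (F : 'I_n -> 'I_n -> 'I_n -> C) :
  \sum_t \sum_r \sum_s F t r s = \sum_r \sum_s \sum_t F t r s.
Proof.
rewrite exchange_big; apply: eq_bigr => r _; exact: exchange_big.
Qed.

Lemma sumsq_ge0 : 0 <= \sum_r \sum_s \sum_t `|Dk t r s| ^+ 2.
Proof. by do 3! (apply: sumr_ge0 => ? _); rewrite exprn_ge0. Qed.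

Lemma pos_sum (I : finType) (F : I -> C) i0 :
  (forall i, 0 <= F i) -> 0 < F i0 -> 0 < \sum_i F i.
Proof.
move=> h0 h1; rewrite (bigD1 i0) //=; apply: (lt_le_trans h1).
by rewrite lerDl; apply: sumr_ge0 => i _; exact: h0.
Qed.

Lemma sumsq_gt0 : (exists j i k, Dk j i k != 0) -> 0 < \sum_r \sum_s \sum_t `|Dk t r s| ^+ 2.
Proof.
case=> j [i [k nz]].
apply: (@pos_sum _ _ i) => [r|]; first by do 2! (apply: sumr_ge0 => ? _); rewrite exprn_ge0.
apply: (@pos_sum _ _ k) => [s|]; first by apply: sumr_ge0 => ? _; rewrite exprn_ge0.
apply: (@pos_sum _ _ j) => [t|]; first by rewrite exprn_ge0.
by rewrite exprn_gt0 // normr_gt0.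
Qed.

Lemma final_sym : (forall i j k, Dk j i k = Dk j k i) ->
  chern_scalar c Gam G e = - \sum_r \sum_s \sum_t `|Dk t r s| ^+ 2.
Proof.
have -> : \sum_r \sum_s \sum_t `|Dk t r s| ^+ 2 = \sum_t \sum_r \sum_s `|Dk t r s| ^+ 2.
  exact: esym (sum_reorder _).
move=> hs; rewrite s_formula.
rewrite -!sumrN; apply: eq_bigr => t _.
rewrite -sumrN; apply: eq_bigr => r _; rewrite -sumrN; apply: eq_bigr => s _.
rewrite Q_conj (hs s) mulrN.
by rewrite normCK.
Qed.

Lemma final_asym : (forall i j k, Dk j i k = - Dk j k i) ->
  chern_scalar c Gam G e = \sum_r \sum_s \sum_t `|Dk t r s| ^+ 2.
Proof.
have -> : \sum_r \sum_s \sum_t `|Dk t r s| ^+ 2 = \sum_t \sum_r \sum_s `|Dk t r s| ^+ 2.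
  exact: esym (sum_reorder _).
move=> hs; rewrite s_formula.
apply: eq_bigr => t _.
apply: eq_bigr => r _; apply: eq_bigr => s _.
by rewrite Q_conj (hs s) rmorphN opprK normCK.
Qed.

End Main.

Unset Implicit Arguments.

Theorem lemma4 (R : rcfType) (n : nat)
  (c : 'I_(n.*2) -> 'I_(n.*2) -> 'rV[R]_(n.*2))
  (J G : 'M[R]_(n.*2))
  (Gam : 'I_(n.*2) -> 'I_(n.*2) -> 'rV[R]_(n.*2))
  (e : 'I_n -> 'rV[R[i]]_(n.*2)) :
  is_lie_algebra c -> unimodular c ->
  almost_complex J -> nijenhuis_free c J -> J_inner_product J G ->
  is_chern c J G Gam -> unitary_frame J G e ->
  let D := Dcoef c G e in
  let s := chern_scalar c Gam G e in
  ((forall i j k, D j i k = D j k i) ->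
     s = - (\sum_(r < n) \sum_(s0 < n) \sum_(t < n) `|D t r s0| ^+ 2) /\
     s <= 0 /\
     ((exists j i k, D j i k != 0) -> s < 0)) /\
  ((forall i j k, D j i k = - D j k i) ->
     s = \sum_(r < n) \sum_(s0 < n) \sum_(t < n) `|D t r s0| ^+ 2 /\
     0 <= s /\
     ((exists j i k, D j i k != 0) -> 0 < s)).
Proof.
move=> Hlie Huni Hac Hnij Hip Hch Hfr D s; rewrite /D /s; split.
- move=> hs; have E := final_sym Hlie Huni Hac Hnij Hip Hch Hfr hs.
  split; first exact: E.
  split; first by rewrite E oppr_le0 (sumsq_ge0 c G e).
  by move=> hex; rewrite E oppr_lt0; exact: (sumsq_gt0 hex).
- move=> hs; have E := final_asym Hlie Huni Hac Hnij Hip Hch Hfr hs.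
  split; first exact: E.
  split; first by rewrite E (sumsq_ge0 c G e).
  by move=> hex; rewrite E; exact: (sumsq_gt0 hex).
Qed.
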